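(* For every $k\in\mathbb{N}$, $$D_{\mathbb{R},4k}\ge\left[\sum_{j=0}^{2k}|B_j|^{\frac{8k}{4k+1}}\right]^{\frac{4k+1}{8k}},\qquad B_j=\sum_{\ell=0}^{\lfloor j/2\rfloor}\frac{k!\,(-3)^{j-2\ell}}{\ell!\,(j-2\ell)!\,(k-j+\ell)!}\ (j=0,\dots,2k),$$ with terms having $k-j+\ell<0$ interpreted as $0$; the $B_j$ are the coefficients of $(x^4+y^4-3x^2y^2)^k$.
   Context: $\ell_\infty^n$ is $\mathbb{R}^n$ with the sup norm; for a polynomial $P$ on $\ell_\infty^n$, $\|P\|=\sup_{x\in[-1,1]^n}|P(x)|$. $D_{\mathbb{R},m}$ is the smallest constant $D$ such that for every $N$ and every real $m$-homogeneous polynomial $P(x)=\sum_{|\alpha|=m}a_\alpha x^\alpha$ on $\ell_\infty^N$, $\big(\sum_{|\alpha|=m}|a_\alpha|^{\frac{2m}{m+1}}\big)^{\frac{m+1}{2m}}\le D\|P\|$. $\lfloor h\rfloor$ is the integer part. *)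

(* Defs.v *)
From Stdlib Require Import Reals List Arith.
Import ListNotations.
Open Scope R_scope.

(* Real power x^y for x >= 0 with the convention 0^y = 0 (y > 0).
   (Stdlib's Rpower 0 y = 1, which is wrong for our use.) *)
Definition rpow (x y : R) : R := if Rle_dec x 0 then 0 else Rpower x y.

(* All multi-indices alpha in N^n with |alpha| = m, as lists of length n
   (each listed exactly once). *)
Fixpoint multi_indices (n m : nat) : list (list nat) :=
  match n with
  | O => if Nat.eqb m 0 then [[]] else []
  | S n' => flat_map (fun i => map (cons i) (multi_indices n' (m - i)))
                     (seq 0 (S m))
  end.

Fixpoint monom_from (x : nat -> R) (i : nat) (alpha : list nat) : R :=
  match alpha with
  | [] => 1
  | a :: al => (x i) ^ a * monom_from x (S i) al
  end.

Definition monom (x : nat -> R) (alpha : list nat) : R := monom_from x 0 alpha.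

Definition sumR (l : list R) : R := fold_right Rplus 0 l.

Definition hpoly_eval (N m : nat) (a : list nat -> R) (x : nat -> R) : R :=
  sumR (map (fun alpha => a alpha * monom x alpha) (multi_indices N m)).

Definition in_cube (N : nat) (x : nat -> R) : Prop :=
  forall i, (i < N)%nat -> -1 <= x i <= 1.

Definition hpoly_norm_is (N m : nat) (a : list nat -> R) (nrm : R) : Prop :=
  is_lub (fun v => exists x, in_cube N x /\ v = Rabs (hpoly_eval N m a x)) nrm.

Definition BH_coef_norm (N m : nat) (a : list nat -> R) : R :=
  rpow (sumR (map (fun alpha => rpow (Rabs (a alpha)) (2 * INR m / (INR m + 1)))
                  (multi_indices N m)))
       ((INR m + 1) / (2 * INR m)).

(* D is an admissible constant in the real polynomial Bohnenblust-Hille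
   inequality of degree m; D_{R,m} is the least such D. *)
Definition BH_admissible (m : nat) (D : R) : Prop :=
  forall (N : nat) (a : list nat -> R) (nrm : R),
    hpoly_norm_is N m a nrm -> BH_coef_norm N m a <= D * nrm.

Definition Bcoef (k j : nat) : R :=
  sumR (map (fun l =>
         if Nat.leb j (k + l) then
           INR (fact k) * (-3) ^ (j - 2 * l)
           / (INR (fact l) * INR (fact (j - 2 * l)) * INR (fact (k + l - j)))
         else 0)
       (seq 0 (S (Nat.div2 j)))).

Definition lower_bound (k : nat) : R :=
  rpow (sumR (map (fun j => rpow (Rabs (Bcoef k j)) (8 * INR k / (4 * INR k + 1)))
                  (seq 0 (S (2 * k)))))
       ((4 * INR k + 1) / (8 * INR k)).

(* Main.v *)
Require Import Defs.
From Stdlib Require Import Reals List Arith Lia Lra.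
Import ListNotations.
Open Scope R_scope.

Definition Sg (n:nat) (f:nat->R) := sumR (map f (seq 0 n)).

Lemma sumR_app l1 l2 : sumR (l1 ++ l2) = sumR l1 + sumR l2.
Proof. induction l1; simpl; [ring| rewrite IHl1; ring]. Qed.

Lemma Sg_S n f : Sg (S n) f = Sg n f + f n.
Proof. unfold Sg. rewrite seq_S, map_app, sumR_app. simpl. ring. Qed.

Lemma Sg_0 f : Sg 0 f = 0.
Proof. reflexivity. Qed.

Lemma Sg_ext n f g : (forall i, (i<n)%nat -> f i = g i) -> Sg n f = Sg n g.
Proof. induction n; intros H; [reflexivity|]. rewrite !Sg_S, IHn by (intros; apply H; lia).
 rewrite H by lia. reflexivity. Qed.

Lemma Sg_plus n f g : Sg n (fun i => f i + g i) = Sg n f + Sg n g.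
Proof. induction n; [simpl; unfold Sg; simpl; ring|]. rewrite !Sg_S, IHn. ring. Qed.

Lemma Sg_scal n c f : c * Sg n f = Sg n (fun i => c * f i).
Proof. induction n; [unfold Sg; simpl; ring|]. rewrite !Sg_S, <- IHn. ring. Qed.

Lemma Sg_scalr n c f : Sg n f * c = Sg n (fun i => f i * c).
Proof. rewrite Rmult_comm, Sg_scal. apply Sg_ext; intros; ring. Qed.

Lemma Sg_zero n f : (forall i, (i<n)%nat -> f i = 0) -> Sg n f = 0.
Proof. intros H. rewrite (Sg_ext n f (fun _ => 0)) by auto. induction n; [reflexivity|].
 rewrite Sg_S, IHn by (intros; apply H; lia). ring. Qed.

Lemma Sg_swap n m g : Sg n (fun i => Sg m (g i)) = Sg m (fun j => Sg n (fun i => g i j)).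
Proof. induction n.
 - rewrite Sg_0. symmetry. apply Sg_zero. intros; reflexivity.
 - rewrite Sg_S, IHn. rewrite <- Sg_plus. apply Sg_ext. intros. rewrite Sg_S. reflexivity. Qed.

Lemma Sg_add_zero n m f : (forall i, (n <= i < n+m)%nat -> f i = 0) -> Sg (n+m) f = Sg n f.
Proof. induction m; intros H. { rewrite Nat.add_0_r; reflexivity. }
 rewrite Nat.add_succ_r, Sg_S, IHm by (intros; apply H; lia). rewrite H by lia. ring. Qed.

Lemma Sg_offset a n g : Sg (a+n) (fun j => if Nat.leb a j then g j else 0) = Sg n (fun b => g (a+b)%nat).
Proof. induction n.
 - rewrite Nat.add_0_r, Sg_0. apply Sg_zero. intros i Hi.
   destruct (Nat.leb a i) eqn:E; [apply Nat.leb_le in E; lia| reflexivity].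
 - rewrite Nat.add_succ_r, !Sg_S, IHn. replace (Nat.leb a (a+n)) with true. reflexivity.
   symmetry; apply Nat.leb_le; lia. Qed.

Lemma sum_f_R0_Sg f n : sum_f_R0 f n = Sg (S n) f.
Proof. induction n. { unfold Sg; simpl; ring. } simpl sum_f_R0. rewrite IHn, (Sg_S (S n)). reflexivity. Qed.

Lemma Sg_even_odd n h : Sg (S (2*n)) h = Sg (S n) (fun j => h (2*j)%nat) + Sg n (fun j => h (S (2*j))).
Proof. induction n. { unfold Sg; simpl; ring. }
 replace (S (2 * S n)) with (S (S (S (2*n)))) by lia.
 rewrite (Sg_S (S (S (2*n)))), (Sg_S (S (2*n))), IHn, (Sg_S (S n)), (Sg_S n).
 replace (2 * S n)%nat with (S (S (2*n))) by lia. rewrite (Sg_S n (fun j => h (S (2*j)))). ring. Qed.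

Lemma mi1_aux n : forall len st, (st + len = S n)%nat -> (0<len)%nat ->
  flat_map (fun i => map (cons i) (multi_indices 0 (n - i))) (seq st len) = [[n]].
Proof. induction len; intros st H1 H2; [lia|].
 simpl seq. simpl flat_map. destruct len.
 - replace st with n by lia. rewrite Nat.sub_diag. simpl. reflexivity.
 - replace (n - st)%nat with (S (n - S st)) by lia. simpl.
   apply IHlen; lia. Qed.

Lemma mi1 n : multi_indices 1 n = [[n]].
Proof. change (multi_indices 1 n) with
  (flat_map (fun i => map (cons i) (multi_indices 0 (n - i))) (seq 0 (S n))).
 apply mi1_aux; lia. Qed.

Lemma mi2 m : multi_indices 2 m = map (fun i => [i; (m-i)%nat]) (seq 0 (S m)).
Proof. change (multi_indices 2 m) with
  (flat_map (fun i => map (cons i) (multi_indices 1 (m - i))) (seq 0 (S m))).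
 generalize (seq 0 (S m)). induction l; [reflexivity|]. cbn [flat_map map]. rewrite mi1. simpl. f_equal. exact IHl. Qed.

Lemma hpoly2 m a x : hpoly_eval 2 m a x = Sg (S m) (fun i => a [i; (m-i)%nat] * (x 0%nat ^ i * (x 1%nat ^ (m-i) * 1))).
Proof. unfold hpoly_eval, Sg. rewrite mi2, map_map. reflexivity. Qed.

Lemma coef2 m a : BH_coef_norm 2 m a =
  rpow (Sg (S m) (fun i => rpow (Rabs (a [i; (m-i)%nat])) (2 * INR m / (INR m + 1)))) ((INR m + 1) / (2 * INR m)).
Proof. unfold BH_coef_norm, Sg. rewrite mi2, map_map. reflexivity. Qed.

Definition Tt k X Y l j :=
  if (Nat.leb (2*l) j && Nat.leb j (k+l))%bool then
    INR (fact k) * (-3)^(j-2*l) / (INR (fact l) * INR (fact (j-2*l)) * INR (fact (k+l-j))) * X^j * Y^(2*k-j)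
  else 0.

Lemma div2_bounds j : (2 * Nat.div2 j <= j < 2 * Nat.div2 j + 2)%nat.
Proof. pose proof (Nat.div2_odd j). destruct (Nat.odd j); simpl in H; lia. Qed.

Lemma stepB k X Y j : (j <= 2*k)%nat ->
  Bcoef k j * X^j * Y^(2*k-j) = Sg (S k) (fun l => Tt k X Y l j).
Proof. intros Hj. pose proof (div2_bounds j) as Hd.
 unfold Bcoef. fold (Sg (S (Nat.div2 j)) (fun l =>
         if Nat.leb j (k + l) then
           INR (fact k) * (-3) ^ (j - 2 * l)
           / (INR (fact l) * INR (fact (j - 2 * l)) * INR (fact (k + l - j)))
         else 0)).
 rewrite Rmult_assoc, Sg_scalr.
 replace (S k) with (S (Nat.div2 j) + (k - Nat.div2 j))%nat by lia.
 rewrite Sg_add_zero.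
 - apply Sg_ext. intros l Hl. unfold Tt. replace (Nat.leb (2*l) j) with true
     by (symmetry; apply Nat.leb_le; lia). simpl andb.
   destruct (Nat.leb j (k+l)); ring.
 - intros l Hl. unfold Tt. replace (Nat.leb (2*l) j) with false
     by (symmetry; apply Nat.leb_gt; lia). reflexivity. Qed.

Lemma stepA k X Y l : (l <= k)%nat ->
  C k l * (X^2)^l * Sg (S (k-l)) (fun b => C (k-l) b * (-3*X*Y)^b * (Y^2)^(k-l-b))
  = Sg (S (2*k)) (fun j => Tt k X Y l j).
Proof. intros Hl.
 replace (S (2*k)) with ((2*l + S (k-l)) + (k-l))%nat by lia.
 rewrite Sg_add_zero.
 2:{ intros j Hj. unfold Tt. replace (Nat.leb j (k+l)) with false
     by (symmetry; apply Nat.leb_gt; lia). rewrite Bool.andb_false_r. reflexivity. }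
 rewrite (Sg_ext (2*l + S (k-l)) (fun j => Tt k X Y l j) (fun j => if Nat.leb (2*l) j then
    INR (fact k) * (-3)^(j-2*l) / (INR (fact l) * INR (fact (j-2*l)) * INR (fact (k+l-j))) * X^j * Y^(2*k-j) else 0)).
 2:{ intros j Hj. unfold Tt. replace (Nat.leb j (k+l)) with true
     by (symmetry; apply Nat.leb_le; lia). rewrite Bool.andb_true_r. reflexivity. }
 rewrite Sg_offset, Sg_scal. apply Sg_ext. intros b Hb.
 replace (2*l+b-2*l)%nat with b by lia.
 replace (k+l-(2*l+b))%nat with (k-l-b)%nat by lia.
 replace (2*k-(2*l+b))%nat with (b + 2*(k-l-b))%nat by lia.
 unfold C. rewrite !pow_add, !Rpow_mult_distr, <- !pow_mult.
 replace (k - l - b)%nat with (k - l - b)%nat by reflexivity.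
 
 field. repeat split; apply INR_fact_neq_0. Qed.

Lemma expand k X Y : (X^2 + Y^2 - 3*X*Y)^k = Sg (S (2*k)) (fun j => Bcoef k j * X^j * Y^(2*k - j)).
Proof.
 replace (X^2 + Y^2 - 3*X*Y) with (X^2 + (-3*X*Y + Y^2)) by ring.
 rewrite binomial, sum_f_R0_Sg.
 rewrite (Sg_ext _ _ (fun l => Sg (S (2*k)) (fun j => Tt k X Y l j))).
 2:{ intros l Hl. rewrite binomial, sum_f_R0_Sg. apply stepA. lia. }
 rewrite Sg_swap. apply Sg_ext. intros j Hj. symmetry. apply stepB. lia. Qed.

Definition acoef (k:nat) (alpha : list nat) : R :=
  match alpha with
  | [i; _] => if Nat.even i then Bcoef k (Nat.div2 i) else 0
  | _ => 0
  end.

Lemma acoef_eq k i m : acoef k [i; m] = if Nat.even i then Bcoef k (Nat.div2 i) else 0.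
Proof. reflexivity. Qed.

Lemma even_S2 j : Nat.even (S (2*j)) = false.
Proof. rewrite <- Nat.add_1_r. apply Nat.even_odd. Qed.

Lemma eval_a k x : hpoly_eval 2 (4*k) (acoef k) x = ((x 0%nat ^2)^2 + (x 1%nat ^2)^2 - 3*(x 0%nat^2)*(x 1%nat^2))^k.
Proof.
 rewrite hpoly2, expand. replace (S (4*k)) with (S (2*(2*k))) by lia.
 rewrite Sg_even_odd. erewrite (Sg_zero (2*k)); [rewrite Rplus_0_r|].
 2:{ intros i Hi. rewrite acoef_eq. rewrite even_S2. ring. }
 apply Sg_ext. intros j Hj. rewrite acoef_eq. rewrite Nat.even_even, Nat.div2_double.
 rewrite <- !pow_mult. replace (4*k - 2*j)%nat with (2*(2*k-j))%nat by lia. ring. Qed.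

Lemma coef_a k : (1 <= k)%nat -> BH_coef_norm 2 (4*k) (acoef k) = lower_bound k.
Proof. intros hk.
 rewrite coef2. unfold lower_bound.
 replace (INR (4*k)) with (4 * INR k) by (rewrite mult_INR; simpl; ring).
 replace (2 * (4 * INR k) / (4 * INR k + 1)) with (8 * INR k / (4 * INR k + 1)) by (field; pose proof (pos_INR k); lra).
 replace ((4 * INR k + 1) / (2 * (4 * INR k))) with ((4 * INR k + 1) / (8 * INR k)) by (f_equal; ring).
 f_equal. fold (Sg (S (2*k)) (fun j => rpow (Rabs (Bcoef k j)) (8 * INR k / (4 * INR k + 1)))).
 replace (S (4*k)) with (S (2*(2*k))) by lia.
 rewrite Sg_even_odd. erewrite (Sg_zero (2*k)); [rewrite Rplus_0_r|].
 2:{ intros i Hi. rewrite acoef_eq. rewrite even_S2. rewrite Rabs_R0. unfold rpow.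
     destruct (Rle_dec 0 0); [reflexivity| lra]. }
 apply Sg_ext. intros j Hj. rewrite acoef_eq. rewrite Nat.even_even, Nat.div2_double. reflexivity. Qed.

Lemma f_bound X Y : 0 <= X <= 1 -> 0 <= Y <= 1 -> Rabs (X^2 + Y^2 - 3*X*Y) <= 1.
Proof. intros HX HY. apply Rabs_le. split.
 - assert (X*Y <= 1) by nra. pose proof (Rle_0_sqr (X-Y)). unfold Rsqr in *. nra.
 - destruct (Rle_dec X Y); nra. Qed.

Theorem mainTheorem10 (k : nat) (hk : (1 <= k)%nat) (D : R) :
  BH_admissible (4 * k) D -> lower_bound k <= D.
Proof.
 intros H. rewrite <- (coef_a k hk). rewrite <- (Rmult_1_r D). apply (H 2%nat).
 split.
 - intros v [x [Hx ->]]. rewrite eval_a, <- RPow_abs. rewrite <- (pow1 k).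
   apply pow_incr. split; [apply Rabs_pos|].
   destruct (Hx 0%nat) as [a b]; [lia|]. destruct (Hx 1%nat) as [c d]; [lia|].
   apply f_bound; simpl; nra.
 - intros b Hb. apply Hb. exists (fun i => if Nat.eqb i 0 then 1 else 0). split.
   + intros i Hi. destruct (Nat.eqb i 0); lra.
   + rewrite eval_a. simpl.
     replace (1 * (1 * 1) * (1 * (1 * 1) * 1) + 0 * (0 * 1) * (0 * (0 * 1) * 1) -
      3 * (1 * (1 * 1)) * (0 * (0 * 1))) with 1 by ring.
     rewrite pow1, Rabs_R1. reflexivity.
Qed.
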